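(* For every $n \geq 6$, $c(\Gamma_n) \leq \left\lceil \frac{n}{3} \right\rceil$.
   Context: The Fibonacci cube $\Gamma_n$ is the subgraph of the hypercube $Q_n$ (vertex set $\{0,1\}^n$, adjacency = differing in exactly one position) induced by all binary strings of length $n$ containing no two consecutive 1's. Cops and Robbers: $k$ cops choose starting vertices, then the robber does; in each round all cops move (to a neighbor or stay), then the robber moves (to a neighbor or stays); cops win if some cop occupies the robber's vertex. The cop number $c(G)$ is the minimum $k$ for which the cops can guarantee capture. *)

(* Defs.v *)
From mathcomp Require Import all_boot.
Set Implicit Arguments.
Unset Strict Implicit.
Unset Printing Implicit Defensive.

Section CopsRobbers.
Variables (T : finType) (e : rel T) (k : nat).

Definition config := {ffun 'I_k -> T}.

Definition step (x y : T) : Prop := y = x \/ e x y.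

Definition caught (c : config) (r : T) : Prop := exists i, c i = r.

(* [cops_win c r]: in the position where the cops are at [c], the robber is
   at [r] and it is the cops' turn, the cops can force a capture
   (least fixed point = capture in finitely many rounds, which for a
   finite game is the same as guaranteeing capture). *)
Inductive cops_win : config -> T -> Prop :=
| CopsWin (c : config) (r : T) (c' : config) :
    (forall i, step (c i) (c' i)) ->
    (caught c' r \/
     (forall r', step r r' -> ~ caught c' r' -> cops_win c' r')) ->
    cops_win c r.

Definition k_cops_win : Prop :=
  exists c0 : config, forall r0 : T, caught c0 r0 \/ cops_win c0 r0.

End CopsRobbers.

Definition cop_number_le (T : finType) (e : rel T) (m : nat) : Prop :=
  exists2 k, k <= m & k_cops_win e k.

Definition fib_string (n : nat) (x : {ffun 'I_n -> bool}) : bool :=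
  [forall i : 'I_n, forall j : 'I_n, (val j == (val i).+1) ==> ~~ (x i && x j)].

Definition fib_vertex (n : nat) := {x : {ffun 'I_n -> bool} | fib_string x}.

Definition fib_adj (n : nat) : rel (fib_vertex n) :=
  fun x y => #|[set i : 'I_n | val x i != val y i]| == 1.

(* Main.v *)
Require Import Defs.
From mathcomp Require Import all_boot zify.
Set Implicit Arguments. Unset Strict Implicit. Unset Printing Implicit Defensive.

Section Fib.
Variable n : nat.
Local Notation bs := {ffun 'I_n -> bool}.
Local Notation V := (fib_vertex n).

Definition hd (x y : bs) := #|[set i | x i != y i]|.

Lemma hd_sym x y : hd x y = hd y x.
Proof. by rewrite /hd; apply: eq_card => i; rewrite !inE eq_sym. Qed.

Lemma hd_tri x y z : hd x z <= hd x y + hd y z.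
Proof.
rewrite /hd; apply: leq_trans (_ : #|[set i | x i != y i] :|: [set i | y i != z i]| <= _).
  apply: subset_leq_card; apply/subsetP => i; rewrite !inE.
  by case: (x i); case: (y i); case: (z i).
by rewrite cardsU leq_subr.
Qed.

Lemma hd0 x y : hd x y = 0 -> x = y.
Proof.
move/eqP; rewrite /hd cards_eq0 => /eqP H; apply/ffunP => i.
apply/eqP; apply: contraT => Hi.
have : i \in (set0 : {set 'I_n}) by rewrite -H inE.
by rewrite inE.
Qed.

Lemma hdxx x : hd x x = 0.
Proof. by apply/eqP; rewrite /hd cards_eq0; apply/eqP/setP => i; rewrite !inE eqxx. Qed.

Lemma fib_nc (x : V) (a b : 'I_n) : val x a -> val x b -> (b : nat) != (a : nat).+1.
Proof.
move=> Ha Hb; have := forallP (forallP (valP x) a) b.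
by rewrite Ha Hb /= implybF.
Qed.

Definition zb (m : nat) (x : bs) : bs := [ffun i => x i && (i %/ 3 != m)].

Lemma zb_fib m x : fib_string x -> fib_string (zb m x).
Proof.
move=> H; apply/forallP => i; apply/forallP => j; rewrite !ffunE.
apply/implyP => Hij; move/implyP: (forallP (forallP H i) j) => /(_ Hij).
by apply: contra => /andP [/andP [-> _] /andP [-> _]].
Qed.

Definition sh m (x : V) : V := exist _ (zb m (val x)) (zb_fib m (valP x)).

Definition w (m : nat) (x : bs) := #|[set i : 'I_n | (i %/ 3 == m) && x i]|.

Lemma hd_zbw m x : hd (zb m x) x = w m x.
Proof.
rewrite /hd /w; apply: eq_card => i; rewrite !inE ffunE.
by case: (x i); case: (_ == m).
Qed.

Lemma hd_zb m x y : hd (zb m x) (zb m y) <= hd x y.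
Proof.
apply: subset_leq_card; apply/subsetP => i; rewrite !inE !ffunE.
by case: (x i); case: (y i); case: (_ == m).
Qed.

Definition mkV (z : bs) (H : fib_string z) : V := exist _ z H.

Definition upd (x : bs) (k : 'I_n) (b : bool) : bs :=
  [ffun i => if i == k then b else x i].

Lemma hd_upd (x y : bs) (k : 'I_n) : x k != y k -> hd (upd x k (y k)) y = (hd x y).-1.
Proof.
move=> Hk; rewrite /hd (cardsD1 k [set i | x i != y i]) inE Hk /=.
apply: eq_card => i; rewrite !inE ffunE.
by case: (i =P k) => [->|]; rewrite ?eqxx.
Qed.

Lemma adj_upd (x : bs) (k : 'I_n) : hd x (upd x k (~~ x k)) = 1.
Proof.
rewrite /hd -(cards1 k); apply: eq_card => i; rewrite !inE ffunE.
by case: (i =P k) => [->|]; rewrite ?eqxx; case: (x k).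
Qed.

Lemma closer (x y : V) : exists z : V,
  ((z == x) || fib_adj x z) && (hd (val z) (val y) == (hd (val x) (val y)).-1).
Proof.
case: (pickP [pred k | val x k != val y k]) => [k /= Hk | H0]; last first.
  have -> : x = y.
    by apply: val_inj; apply/ffunP => i; move: (H0 i) => /= /negbFE /eqP.
  by exists y; rewrite eqxx /= hdxx.
case: (pickP [pred k | val x k && ~~ val y k]) => [j /= /andP [Hxj Hyj] | H1].
  have Hf : fib_string (upd (val x) j false).
    apply/forallP => a; apply/forallP => b; rewrite !ffunE.
    apply/implyP => Hab; move/implyP: (forallP (forallP (valP x) a) b) => /(_ Hab).
    by apply: contra; case: (a == j); case: (b == j); rewrite ?andbF; case: (\val x a); case: (\val x b).
  exists (mkV Hf); apply/andP; split.
    apply/orP; right; rewrite /fib_adj /=.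
    have E : upd (val x) j false = upd (val x) j (~~ val x j) by rewrite Hxj.
    by change (hd (val x) (upd (val x) j false) == 1); rewrite E adj_upd.
  have Hyj' : val y j = false by apply: negbTE.
  rewrite /= -Hyj' hd_upd //; by rewrite Hxj Hyj'.
have Hxk : val x k = false.
  by move: (H1 k) Hk => /=; case: (val x k); case: (val y k).
have Hyk : val y k = true by move: Hk; rewrite Hxk; case: (val y k).
have Hnb : forall a : 'I_n, (val a == (val k).+1) || (val k == (val a).+1) -> val x a = false.
  move=> a Ha; case Hxa: (val x a) => //.
  have Hya : val y a by move: (H1 a) => /=; rewrite Hxa /=; case: (val y a).
  case/orP: Ha => /eqP Ha.
    by move: (fib_nc Hyk Hya); rewrite Ha eqxx.
  by move: (fib_nc Hya Hyk); rewrite Ha eqxx.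
have Hf : fib_string (upd (val x) k true).
  apply/forallP => a; apply/forallP => b; rewrite !ffunE.
  have := forallP (forallP (valP x) a) b.
  case: (a =P k) => [->|_]; case: (b =P k) => [->|_] //=.
  - by move=> _; apply/implyP => /eqP H; exfalso; lia.
  - by move=> _; apply/implyP => Hb; rewrite Hnb ?Hb.
  - by move=> _; apply/implyP => Hb; rewrite Hnb ?Hb ?orbT.
exists (mkV Hf); apply/andP; split.
  apply/orP; right; rewrite /fib_adj /=.
  change (hd (val x) (upd (val x) k true) == 1).
  by have := adj_upd (val x) k; rewrite Hxk /= => ->.
by rewrite /= -Hyk hd_upd // Hxk Hyk.
Qed.

Lemma ord_neq (a b : 'I_n) : a != b -> (a : nat) <> (b : nat).
Proof. by move=> /eqP H E; apply: H; apply: val_inj. Qed.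

Lemma three (x : V) (a b c : 'I_n) m : a %/ 3 = m -> b %/ 3 = m -> c %/ 3 = m ->
  a != b -> a != c -> b != c -> val x a -> val x b -> val x c -> False.
Proof.
move=> Ha Hb Hc /ord_neq Hab /ord_neq Hac /ord_neq Hbc xa xb xc.
have := fib_nc xa xb; have := fib_nc xb xa; have := fib_nc xa xc.
have := fib_nc xc xa; have := fib_nc xb xc; have := fib_nc xc xb.
lia.
Qed.

Lemma two_blocks (x : V) (a b c d : 'I_n) : a %/ 3 = 0 -> b %/ 3 = 0 ->
  c %/ 3 = 1 -> d %/ 3 = 1 -> a != b -> c != d ->
  val x a -> val x b -> val x c -> val x d -> False.
Proof.
move=> Ha Hb Hc Hd /ord_neq Hab /ord_neq Hcd xa xb xc xd.
have := fib_nc xa xb; have := fib_nc xb xa; have := fib_nc xa xc.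
have := fib_nc xc xa; have := fib_nc xb xc; have := fib_nc xc xb.
have := fib_nc xa xd; have := fib_nc xd xa; have := fib_nc xb xd.
have := fib_nc xd xb; have := fib_nc xc xd; have := fib_nc xd xc.
lia.
Qed.

Definition mv (x y : V) : V :=
  odflt x [pick z | ((z == x) || fib_adj x z) &&
                    (hd (val z) (val y) == (hd (val x) (val y)).-1)].

Lemma mvP x y : step (@fib_adj n) x (mv x y) /\
  hd (val (mv x y)) (val y) = (hd (val x) (val y)).-1.
Proof.
rewrite /mv; case: pickP => [z /andP [H1 /eqP H2] | H0] /=.
  split=> //; case/orP: H1 => [/eqP ->|H]; [by left | by right].
by case: (closer x y) => z Hz; move: (H0 z); rewrite Hz.
Qed.

Lemma adj_diff (r r' : V) : fib_adj r r' ->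
  exists j, forall i, (val r i != val r' i) = (i == j).
Proof.
move/cards1P => [j Hj]; exists j => i.
by move/setP: Hj => /(_ i); rewrite !inE.
Qed.

Lemma zb_same (r r' : bs) (j : 'I_n) m : (forall i, (r i != r' i) = (i == j)) ->
  j %/ 3 = m -> zb m r = zb m r'.
Proof.
move=> Hd Hj; apply/ffunP => i; rewrite !ffunE.
case: (i =P j) => [->|/eqP Hij]; first by rewrite Hj eqxx !andbF.
by move: (Hd i); rewrite (negbTE Hij) => /negbFE /eqP ->.
Qed.

Lemma w_same (r r' : bs) (j : 'I_n) m : (forall i, (r i != r' i) = (i == j)) ->
  j %/ 3 != m -> w m r = w m r'.
Proof.
move=> Hd Hj; apply: eq_card => i; rewrite !inE.
case: (i =P j) => [->|/eqP Hij]; first by rewrite (negbTE Hj).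
by move: (Hd i); rewrite (negbTE Hij) => /negbFE /eqP ->.
Qed.

Lemma F3 (r r' : V) (j : 'I_n) m : (forall i, (val r i != val r' i) = (i == j)) ->
  j %/ 3 = m -> 1 < w m (val r) -> 1 < w m (val r') -> False.
Proof.
move=> Hd Hj /card_gt1P [a [b [Ha Hb Hab]]] /card_gt1P [c [d [Hc Hd' Hcd]]].
move: Ha Hb Hc Hd'; rewrite !inE => /andP [/eqP Ha ra] /andP [/eqP Hb rb]
  /andP [/eqP Hc rc] /andP [/eqP Hd2 rd].
have Hag : forall i, i != j -> val r i = val r' i.
  by move=> i Hi; move: (Hd i); rewrite (negbTE Hi) => /negbFE /eqP.
have Hrj : val r j != val r' j by rewrite Hd eqxx.
case Erj : (val r j) in Hrj.
- have Er' : val r' j = false by move: Hrj; case: (val r' j).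
  have Hcj : j != c by apply/eqP => E; move: rc; rewrite -E Er'.
  have Hdj : j != d by apply/eqP => E; move: rd; rewrite -E Er'.
  apply: (three (x := r) Hj Hc Hd2 Hcj Hdj Hcd Erj).
    by rewrite Hag // eq_sym.
  by rewrite Hag // eq_sym.
- have Er' : val r' j = true by move: Hrj; case: (val r' j).
  have Haj : j != a by apply/eqP => E; move: ra; rewrite -E Erj.
  have Hbj : j != b by apply/eqP => E; move: rb; rewrite -E Erj.
  apply: (three (x := r') Hj Ha Hb Haj Hbj Hab Er').
    by rewrite -Hag // eq_sym.
  by rewrite -Hag // eq_sym.
Qed.

End Fib.

Section Game.
Variable n : nat.
Hypothesis n6 : 6 <= n.
Local Notation K := ((n + 2) %/ 3).
Local Notation V := (fib_vertex n).
Local Notation cfg := {ffun 'I_K -> V}.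

Definition Hm (c : cfg) (r : V) (i : 'I_K) := (hd (val (c i)) (zb i (val r))).-1.
Definition gm (c : cfg) (r : V) (i : 'I_K) :=
  if (Hm c r i == 0) && (1 < w i (val r)) then 0 else 1.
Definition nu (c : cfg) (r : V) := \sum_(i < K) (Hm c r i + gm c r i).

Lemma win1 (c : cfg) (r : V) i : fib_adj (c i) r -> cops_win (@fib_adj n) c r.
Proof.
move=> Ha; apply: (@CopsWin _ _ _ c r [ffun l => if l == i then r else c l]).
  by move=> l; rewrite ffunE; case: eqP => [->|_]; [right | left].
by left; exists i; rewrite ffunE eqxx.
Qed.

Lemma sum_lt (F G : 'I_K -> nat) m : (forall i, i != m -> F i <= G i) ->
  F m < G m -> \sum_i F i < \sum_i G i.
Proof.
move=> HFG Hm'; rewrite (bigD1 m) //= [X in _ < X](bigD1 m) //= -addSn.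
by apply: leq_add => //; apply: leq_sum => l /HFG.
Qed.

Lemma block_lt (j : 'I_n) : j %/ 3 < K.
Proof. have := ltn_ord j; lia. Qed.

Lemma arith1 a b d : d <= 1 -> a <= b + d -> a.-1 <= b.
Proof. lia. Qed.

Lemma win N : forall (c : cfg) r, nu c r < N -> cops_win (@fib_adj n) c r.
Proof.
elim: N => // N IH c r Hnu.
pose c' : cfg := [ffun i => mv (c i) (sh i r)].
have Hc'd : forall i, hd (val (c' i)) (zb i (val r)) = Hm c r i.
  by move=> i; rewrite ffunE (mvP _ _).2.
apply: (@CopsWin _ _ _ c r c'); first by move=> i; rewrite ffunE; exact: (mvP _ _).1.
right => r' Hst Hnc.
have Hnu' : nu c r <= N by [].
have IH' : forall c2 r2, nu c2 r2 < nu c r -> cops_win (@fib_adj n) c2 r2.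
  by move=> c2 r2 H; apply: IH; exact: leq_trans H Hnu'.
have Hnc' : forall i, c' i <> r' by move=> i E; apply: Hnc; exists i.
have Hgen : forall i, hd (val (c' i)) (zb i (val r')) <=
                      Hm c r i + hd (zb i (val r)) (zb i (val r')).
  by move=> i; rewrite -Hc'd; apply: hd_tri.
case: Hst => [Er | Hadj].
- subst r'.
  have Hterm : forall i, Hm c' r i + gm c' r i <= Hm c r i + gm c r i.
    move=> i; have E : Hm c' r i = (Hm c r i).-1 by rewrite /Hm Hc'd.
    rewrite /gm E; case: (Hm c r i) => [|h] //=.
    by case: ifP => _; lia.
  case: (pickP [pred i | 0 < Hm c r i]) => [i /= Hi | H0].
    apply: IH'; apply: (sum_lt (m := i)) => [l _|].
      exact: Hterm.
    have E : Hm c' r i = (Hm c r i).-1 by rewrite /Hm Hc'd.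
    rewrite /gm E; move: Hi; case: (Hm c r i) => [|h] //= _.
    by case: ifP => _; lia.
  have Hc' : forall i, val (c' i) = zb i (val r).
    move=> i; apply: hd0; rewrite Hc'd.
    by move: (H0 i) => /=; case: (Hm c r i).
  have Hw0 : forall i : 'I_K, w i (val r) != 0.
    move=> i; apply/eqP => E; apply: (Hnc' i); apply: val_inj.
    by rewrite Hc'; apply: hd0; rewrite hd_zbw.
  have Hwin : forall i : 'I_K, w i (val r) = 1 -> cops_win (@fib_adj n) c' r.
    move=> i Hi; apply: (win1 (i := i)).
    by rewrite /fib_adj -/(hd _ _) Hc' hd_zbw Hi.
  have K0 : 0 < K by lia.
  have K1 : 1 < K by lia.
  case E0 : (w (Ordinal K0) (val r)) => [|[|w0]].
  + by move: (Hw0 (Ordinal K0)); rewrite E0.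
  + exact: (Hwin (Ordinal K0)).
  case E1 : (w (Ordinal K1) (val r)) => [|[|w1]].
  + by move: (Hw0 (Ordinal K1)); rewrite E1.
  + exact: (Hwin (Ordinal K1)).
  have : 1 < w (Ordinal K0) (val r) by rewrite E0.
  have : 1 < w (Ordinal K1) (val r) by rewrite E1.
  move=> /card_gt1P [c1 [d1 [Hc Hd Hcd]]] /card_gt1P [a1 [b1 [Ha Hb Hab]]].
  move: Ha Hb Hc Hd; rewrite !inE /= => /andP [/eqP Ha ra] /andP [/eqP Hb rb]
    /andP [/eqP Hc rc] /andP [/eqP Hd rd].
  by case: (two_blocks Ha Hb Hc Hd Hab Hcd ra rb rc rd).
- case: (adj_diff Hadj) => j Hj.
  pose m : 'I_K := Ordinal (block_lt j).
  have Hzm : zb m (val r) = zb m (val r') by apply: (zb_same Hj).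
  have Hle1 : forall i, hd (zb i (val r)) (zb i (val r')) <= 1.
    move=> i; apply: (leq_trans (hd_zb _ _ _)).
    by move: Hadj; rewrite /fib_adj -/(hd _ _) => /eqP ->.
  have HH : forall i, Hm c' r' i <= Hm c r i.
    move=> i; exact: (arith1 (Hle1 i) (Hgen i)).
  have Hmm : Hm c' r' m = (Hm c r m).-1 by rewrite /Hm -Hzm Hc'd.
  have Hne : forall i, i != m -> Hm c' r' i + gm c' r' i <= Hm c r i + gm c r i.
    move=> i Him; have := HH i; rewrite /gm.
    have -> : w i (val r') = w i (val r).
      symmetry; apply: (w_same Hj); apply: contra Him => /eqP E.
      by apply/eqP; apply: val_inj; rewrite /= E.
    case: (Hm c r i) => [|h].
      by rewrite leqn0 => /eqP ->.
    by case: ifP => _ /=; lia.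
  case Ehm : (Hm c r m) => [|h].
  +
    have Hc'm : val (c' m) = zb m (val r').
      by rewrite -Hzm; apply: hd0; rewrite Hc'd Ehm.
    case Ew : (w m (val r')) => [|[|w']].
    * exfalso; apply: (Hnc' m); apply: val_inj.
      by rewrite Hc'm; apply: hd0; rewrite hd_zbw.
    * apply: (win1 (i := m)).
      by rewrite /fib_adj -/(hd _ _) Hc'm hd_zbw Ew.
    * apply: IH'; apply: (sum_lt (m := m)) => //.
      have Hw : ~~ (1 < w m (val r)).
        apply/negP => Hw; apply: (F3 Hj (erefl _) Hw); by rewrite Ew.
      rewrite /gm Hmm Ehm (negbTE Hw) Ew /=; by [].
  + apply: IH'; apply: (sum_lt (m := m)) => //.
    rewrite Hmm /gm Hmm Ehm /=.
    by case: ifP => _; lia.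
Qed.

End Game.

Lemma zero_fib n : fib_string [ffun _ : 'I_n => false].
Proof. by apply/forallP => i; apply/forallP => j; rewrite !ffunE /= implybT. Qed.

Theorem theorem4p2 (n : nat) : 6 <= n ->
  cop_number_le (@fib_adj n) ((n + 2) %/ 3).
Proof.
move=> n6; exists ((n + 2) %/ 3) => //.
pose z0 : fib_vertex n := mkV (zero_fib n).
exists [ffun _ => z0] => r0; right.
exact: (@win n n6 (nu [ffun _ => z0] r0).+1).
Qed.
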